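(* For $n\geq 1$ and $m\geq 1$, the forcing spectrum $\mathrm{Spec}(C(2m-1,2n+1))$ is an integer interval (i.e. it is continuous).
   Context: $C(k,n)$ denotes the graph with vertices $(a,b)$, $a\in\mathbb{Z}_n$, $0\le b\le k$, and edges $(a,b)(a+1,b)$ and $(a,b)(a,b+1)$ (the grid graph of a quadriculated cylinder with $k$ rows of $n$ squares). For a perfect matching $M$ of a graph $G$, a subset $S\subseteq M$ is a forcing set of $M$ if no other perfect matching of $G$ contains $S$; the forcing number $f(G,M)$ is the minimum size of a forcing set. The forcing spectrum $\mathrm{Spec}(G)$ is the set of forcing numbers of all perfect matchings of $G$; it is continuous if it is a set of consecutive integers. *)

(* Defs.v *)
From mathcomp Require Import all_boot.
Set Implicit Arguments. Unset Strict Implicit. Unset Printing Implicit Defensive.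

Definition cyl_vertex (k n : nat) := ('I_n * 'I_k.+1)%type.

(* Adjacency of C(k,n): (a,b)(a+1,b) (indices mod n) and (a,b)(a,b+1). *)
Definition cyl_adj (k n : nat) : rel (cyl_vertex k n) :=
  fun x y =>
    ((x.2 == y.2 :> nat) &&
       (((x.1 : nat).+1 %% n == y.1) || ((y.1 : nat).+1 %% n == x.1)))
    || ((x.1 == y.1) &&
       (((x.2 : nat).+1 == y.2) || ((y.2 : nat).+1 == x.2))).

Section Matching.
Variables (V : finType) (adj : rel V).

Definition is_edge (E : {set V}) : Prop :=
  exists x y, adj x y /\ x != y /\ E = [set x; y].

Definition perfect_matching (M : {set {set V}}) : Prop :=
  (forall E, E \in M -> is_edge E) /\
  (forall v : V, #|[set E in M | v \in E]| = 1).

Definition forcing_set (M S : {set {set V}}) : Prop :=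
  S \subset M /\
  (forall M', perfect_matching M' -> S \subset M' -> M' = M).

Definition forcing_number (M : {set {set V}}) (f : nat) : Prop :=
  (exists S, forcing_set M S /\ #|S| = f) /\
  (forall S, forcing_set M S -> f <= #|S|).

Definition forcing_spectrum (f : nat) : Prop :=
  exists M, perfect_matching M /\ forcing_number M f.

Definition continuous_nat_set (P : nat -> Prop) : Prop :=
  forall a b c, P a -> P b -> a <= c <= b -> P c.

End Matching.

Definition C_graph_spectrum (k n : nat) : nat -> Prop :=
  forcing_spectrum (@cyl_adj k n).

(* Main.v *)
Require Import Defs.
From mathcomp Require Import all_boot.
From mathcomp Require Import ssralg ssrnum ssrint zify.
From Stdlib Require Import Classical.
Set Implicit Arguments. Unset Strict Implicit. Unset Printing Implicit Defensive.

Section Generic.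
Variables (V : finType) (adj : rel V).
Local Notation pm := (perfect_matching adj).
Implicit Types (M S : {set {set V}}) (E : {set V}) (v : V).

Lemma pm_cover M : pm M -> forall v, exists2 E, E \in M & v \in E.
Proof.
move=> [_ H] v; have /eqP/cards1P [E hE] := H v.
have : E \in [set E0 in M | v \in E0] by rewrite hE set11.
by rewrite inE => /andP[]; exists E.
Qed.

Lemma pm_uniq M : pm M -> forall v E1 E2, E1 \in M -> E2 \in M ->
  v \in E1 -> v \in E2 -> E1 = E2.
Proof.
move=> [_ H] v E1 E2 h1 h2 v1 v2; have /eqP/cards1P [E hE] := H v.
have : E1 \in [set E0 in M | v \in E0] by rewrite inE h1 v1.
have : E2 \in [set E0 in M | v \in E0] by rewrite inE h2 v2.
by rewrite hE !inE => /eqP -> /eqP ->.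
Qed.

Lemma pm_intro M : (forall E, E \in M -> is_edge adj E) ->
  (forall v, exists2 E, E \in M & v \in E) ->
  (forall v E1 E2, E1 \in M -> E2 \in M -> v \in E1 -> v \in E2 -> E1 = E2) ->
  pm M.
Proof.
move=> he hc hu; split=> // v; apply/eqP/cards1P.
have [E hE vE] := hc v; exists E; apply/setP=> E'; rewrite !inE.
apply/andP/eqP=> [[h1 h2]|->]; last by [].
exact: hu h1 hE h2 vE.
Qed.

Lemma pm_edge M E : pm M -> E \in M -> is_edge adj E.
Proof. by case=> h _; apply: h. Qed.

Definition swap (M : {set {set V}}) (e1 e3 e2 e4 : {set V}) :=
  e2 |: (e4 |: ((M :\ e1) :\ e3)).

Definition sq (u1 u2 u3 u4 : V) :=
  [/\ uniq [:: u1; u2; u3; u4], adj u1 u2, adj u2 u3, adj u3 u4 & adj u4 u1].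

Ltac expand_uniq H :=
  move: H; rewrite /= !inE !negb_or => /and4P[/and3P[? ? ?] /andP[? ?] ? _].

Lemma set2_neq (x y z w : V) : x != z -> x != w -> [set x; y] != [set z; w].
Proof.
move=> h1 h2; apply/eqP=> e.
have : x \in [set z; w] by rewrite -e set21.
by rewrite in_set2 (negbTE h1) (negbTE h2).
Qed.

Lemma set2_neq_r (x y z w : V) : y != z -> y != w -> [set x; y] != [set z; w].
Proof. by move=> h1 h2; rewrite setUC; apply: set2_neq. Qed.

Lemma sq_rot u1 u2 u3 u4 : sq u1 u2 u3 u4 -> sq u2 u3 u4 u1.
Proof.
case=> hu a b c d; split=> //; move: hu; rewrite /= !inE !negb_or.
case/and4P=> /and3P[h1 h2 h3] /andP[h4 h5] h6 _.
by rewrite h4 h5 h6 !(eq_sym _ u1) h1 h2 h3.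
Qed.

Section Sq.
Variables (u1 u2 u3 u4 : V).
Hypothesis hsq : sq u1 u2 u3 u4.
Local Notation e1 := [set u1; u2].
Local Notation e2 := [set u2; u3].
Local Notation e3 := [set u3; u4].
Local Notation e4 := [set u4; u1].

Lemma sq_neqs : u1 != u2 /\ u1 != u3 /\ u1 != u4 /\ u2 != u3 /\ u2 != u4 /\ u3 != u4.
Proof.
case: hsq => hu _ _ _ _; move: hu; rewrite /= !inE !negb_or.
by case/and4P=> /and3P[-> -> ->] /andP[-> ->] -> _.
Qed.

Lemma e_neqs : e1 != e2 /\ e1 != e3 /\ e1 != e4 /\ e2 != e3 /\ e2 != e4 /\ e3 != e4.
Proof.
have [h12 [h13 [h14 [h23 [h24 h34]]]]] := sq_neqs.
do !split; first [ apply: set2_neq; by rewrite // eq_sym | apply: set2_neq_r; by rewrite // eq_sym ].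
Qed.

Lemma swap_pm M : pm M -> e1 \in M -> e3 \in M -> pm (swap M e1 e3 e2 e4).
Proof.
move=> hM h1 h3.
have [h12 [h13 [h14 [h23 [h24 h34]]]]] := sq_neqs.
case: hsq => _ a12 a23 a34 a41.
have nin2 : e2 \notin M.
  apply/negP=> h; have := pm_uniq hM h1 h (set22 _ _) (set21 _ _).
  by move/eqP; have [/negbTE -> _] := e_neqs.
have nin4 : e4 \notin M.
  apply/negP=> h; have := pm_uniq hM h1 h (set21 _ _) (set22 _ _).
  by move/eqP; have [_ [_ [/negbTE -> _]]] := e_neqs.
apply: pm_intro.
- move=> E; rewrite !inE => /or3P[/eqP->|/eqP->|/andP[_ /andP[_ hE]]].
  + by exists u2, u3.
  + by exists u4, u1; rewrite eq_sym h14.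
  + exact: pm_edge hM hE.
- move=> v.
  case: (boolP (v \in e2)) => [hv|nv2]; first by exists e2 => //; rewrite !inE eqxx.
  case: (boolP (v \in e4)) => [hv|nv4]; first by exists e4 => //; rewrite !inE eqxx orbT.
  have [E hE vE] := pm_cover hM v; exists E => //.
  rewrite !inE hE !andbT; apply/orP; right; apply/orP; right.
  apply/andP; split; apply/eqP=> e; subst E.
  + move: vE nv2 nv4; rewrite !in_set2 => /orP[]/eqP-> ; by rewrite !eqxx ?orbT.
  + move: vE nv2 nv4; rewrite !in_set2 => /orP[]/eqP-> ; by rewrite !eqxx ?orbT.
- have key : forall v E, E \in M -> E != e1 -> E != e3 -> v \in E ->
     (v \in e2) = false /\ (v \in e4) = false.
    move=> v E hE n1 n3 vE; rewrite !in_set2; split; apply/negP=> /orP[]/eqP ev; subst v.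
    + by move: n1; rewrite (pm_uniq hM hE h1 vE (set22 _ _)) eqxx.
    + by move: n3; rewrite (pm_uniq hM hE h3 vE (set21 _ _)) eqxx.
    + by move: n3; rewrite (pm_uniq hM hE h3 vE (set22 _ _)) eqxx.
    + by move: n1; rewrite (pm_uniq hM hE h1 vE (set21 _ _)) eqxx.
  have d24 : forall v, v \in e2 -> v \in e4 -> False.
    move=> v; rewrite !in_set2 => /orP[]/eqP-> /orP[]/eqP e;
    by move: h12 h13 h23 h24 h34 h14; rewrite ?e ?eqxx //= ?andbF.
  move=> v E1 E2; rewrite !inE.
  move=> /or3P[/eqP->|/eqP->|/andP[n3 /andP[n1 hE1]]] /or3P[/eqP->|/eqP->|/andP[m3 /andP[m1 hE2]]] // va vb.
  + by case: (d24 v).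
  + by have [] := key v E2 hE2 m1 m3 vb; rewrite va.
  + by case: (d24 v).
  + by have [_] := key v E2 hE2 m1 m3 vb; rewrite va.
  + by have [] := key v E1 hE1 n1 n3 va; rewrite vb.
  + by have [_] := key v E1 hE1 n1 n3 va; rewrite vb.
  + exact: (pm_uniq hM hE1 hE2 va vb).
Qed.

Lemma e2_notin M : pm M -> e1 \in M -> e2 \notin M.
Proof.
move=> hM h1; apply/negP=> h; have := pm_uniq hM h1 h (set22 _ _) (set21 _ _).
by move/eqP; have [/negbTE -> _] := e_neqs.
Qed.

Lemma e4_notin M : pm M -> e1 \in M -> e4 \notin M.
Proof.
move=> hM h1; apply/negP=> h; have := pm_uniq hM h1 h (set21 _ _) (set22 _ _).
by move/eqP; have [_ [_ [/negbTE -> _]]] := e_neqs.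
Qed.

Lemma swap_back M : pm M -> e1 \in M -> e3 \in M ->
  swap (swap M e1 e3 e2 e4) e2 e4 e3 e1 = M.
Proof.
move=> hM h1 h3.
have n2 := e2_notin hM h1; have n4 := e4_notin hM h1.
have [d12 [d13 [d14 [d23 [d24 d34]]]]] := e_neqs.
apply/setP=> E; rewrite /swap !inE.
have d21 : e2 != e1 by rewrite eq_sym.
have d31 : e3 != e1 by rewrite eq_sym.
have d41 : e4 != e1 by rewrite eq_sym.
have d32 : e3 != e2 by rewrite eq_sym.
have d42 : e4 != e2 by rewrite eq_sym.
have d43 : e4 != e3 by rewrite eq_sym.
case: (eqVneq E e3) => [->|y3]; first by rewrite ?eqxx h3.
case: (eqVneq E e1) => [->|y1]; first by rewrite ?eqxx h1 ?orbT.
case: (eqVneq E e2) => [->|y2]; first by rewrite ?eqxx ?(negbTE n2) ?(negbTE d21) ?(negbTE d23) /= ?andbF.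
case: (eqVneq E e4) => [->|y4]; first by rewrite ?eqxx ?(negbTE n4) ?(negbTE d41) ?(negbTE d43) ?(negbTE d42) /= ?andbF.
by [].
Qed.

End Sq.

Lemma swapC M e1 e3 e2 e4 : swap M e1 e3 e2 e4 = swap M e3 e1 e4 e2.
Proof.
by apply/setP=> E; rewrite /swap !inE; case: (E == e2); case: (E == e4); case: (E == e1); case: (E == e3).
Qed.

Definition Tw M M' := exists u1 u2 u3 u4, sq u1 u2 u3 u4 /\
  [set u1; u2] \in M /\ [set u3; u4] \in M /\
  M' = swap M [set u1; u2] [set u3; u4] [set u2; u3] [set u4; u1].

Lemma Tw_pm M M' : pm M -> Tw M M' -> pm M'.
Proof. by move=> hM [u1 [u2 [u3 [u4 [h [h1 [h3 ->]]]]]]]; apply: swap_pm. Qed.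

Lemma Tw_sym M M' : pm M -> Tw M M' -> Tw M' M.
Proof.
move=> hM [u1 [u2 [u3 [u4 [h [h1 [h3 ->]]]]]]].
exists u2, u3, u4, u1; split; first exact: sq_rot.
split; first by rewrite !inE eqxx.
split; first by rewrite !inE eqxx orbT.
by rewrite swap_back.
Qed.

Lemma self_forcing M : pm M -> forcing_set adj M M.
Proof.
move=> hM; split=> // M' hM' sub; apply/eqP; rewrite eqEsubset sub andbT.
apply/subsetP=> E hE.
have [x [y [_ [_ eE]]]] := pm_edge hM' hE.
have [E' hE' xE'] := pm_cover hM x.
have hE'' : E' \in M' by apply: (subsetP sub).
by rewrite (pm_uniq hM' hE hE'' _ xE') // eE set21.
Qed.

Lemma fn_exists M : pm M -> exists f, forcing_number adj M f.
Proof.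
move=> hM.
suff: forall b, (exists S, forcing_set adj M S /\ #|S| <= b) -> exists f, forcing_number adj M f.
  by apply; exists M; split; [apply: self_forcing|].
elim=> [|b IH].
  move=> [S [hS hs]]; exists 0; split=> //; exists S; split=> //; apply/eqP; by rewrite -leqn0.
move=> [S [hS hs]].
case: (classic (exists S, forcing_set adj M S /\ #|S| <= b)) => [|hn]; first exact: IH.
exists b.+1; split.
  exists S; split=> //; apply/eqP; rewrite eqn_leq hs /=; rewrite ltnNge; apply/negP=> hb.
  by apply: hn; exists S.
move=> S' hS'; rewrite ltnNge; apply/negP=> hb; by apply: hn; exists S'.
Qed.

Lemma fn_uniq M f f' : forcing_number adj M f -> forcing_number adj M f' -> f = f'.
Proof.
move=> [[S [hS <-]] h] [[S' [hS' <-]] h'].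
by apply/eqP; rewrite eqn_leq h // h'.
Qed.

Lemma Tw_fn M M' f : pm M -> Tw M M' -> forcing_number adj M f ->
  exists2 f', forcing_number adj M' f' & f' <= f.+1.
Proof.
move=> hM hT hf.
have hM' := Tw_pm hM hT.
have [f' hf'] := fn_exists hM'.
exists f' => //.
move: hT => [u1 [u2 [u3 [u4 [h [h1 [h3 eM']]]]]]].
set e1 := [set u1; u2] in h1 eM'; set e3 := [set u3; u4] in h3 eM'.
set e2 := [set u2; u3] in eM'; set e4 := [set u4; u1] in eM'.
have [d12 [d13 [d14 [d23 [d24 d34]]]]] := e_neqs h.
have n2 := e2_notin h hM h1; have n4 := e4_notin h hM h1.
case: hf => [[S [[sub hS] <-]] _].
have hit : (e1 \in S) || (e3 \in S).
  case: (boolP (e1 \in S)) => [//|n1]; case: (boolP (e3 \in S)) => [//|n3]; exfalso.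
  have : S \subset M'.
    apply/subsetP=> E hE; rewrite eM' !inE (subsetP sub _ hE) !andbT.
    by rewrite (memPn n1 _ hE) (memPn n3 _ hE) !orbT.
  move/(hS _ hM') => e; move: n2; rewrite -e eM' !inE eqxx //.
set S2 := e2 |: (e4 |: ((S :\ e1) :\ e3)).
have c2 : #|S2| <= #|S|.+1.
  have cU : forall (A : {set {set V}}) x, #|x |: A| <= #|A|.+1.
    by move=> A x; rewrite cardsU1; case: (x \notin A).
  have cD : #|(S :\ e1) :\ e3| < #|S|.
    apply: proper_card; apply/properP; split.
      by apply/subsetP=> x; rewrite !inE => /andP[_ /andP[_ ->]].
    case/orP: hit => hx; [exists e1 | exists e3]; rewrite // !inE ?eqxx ?andbF //.
  apply: (leq_trans (cU _ _)); rewrite ltnS; apply: (leq_trans (cU _ _)); exact: cD.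
apply: leq_trans c2; case: hf' => _; apply; split.
  apply/subsetP=> E; rewrite /S2 eM' !inE.
  by case/or3P=> [->|->|/andP[-> /andP[-> /(subsetP sub) ->]]]; rewrite ?orbT.
move=> M'' hM'' sub2.
have i2 : e2 \in M'' by apply: (subsetP sub2); rewrite !inE eqxx.
have i4 : e4 \in M'' by apply: (subsetP sub2); rewrite !inE eqxx orbT.
have hr := sq_rot h.
have hpm3 := swap_pm hr hM'' i2 i4.
have e3M : swap M'' e2 e4 e3 e1 = M.
  apply: hS => //; apply/subsetP=> E hE; rewrite /swap !inE.
  case: (eqVneq E e3) => //= x3; case: (eqVneq E e1) => //= x1.
  have EM : E \in M by apply: (subsetP sub).
  have f2 := memPn n2 _ EM; have f4 := memPn n4 _ EM.
  rewrite ?f2 ?f4 /=.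
  by apply: (subsetP sub2); rewrite /S2 !inE (negbTE f2) (negbTE f4) x1 x3 hE.
have := swap_back hr hM'' i2 i4.
rewrite -/e1 -/e2 -/e3 -/e4 e3M => <-.
by rewrite eM' swapC.
Qed.

Inductive reach : {set {set V}} -> {set {set V}} -> Prop :=
| reach0 M : reach M M
| reachS M M1 M0 : Tw M M1 -> reach M1 M0 -> reach M M0.

Lemma ivt M M0 : reach M M0 -> pm M -> forall x y,
  forcing_number adj M x -> forcing_number adj M0 y ->
  forall c, (x <= c <= y) \/ (y <= c <= x) -> forcing_spectrum adj c.
Proof.
elim=> {M M0} [M|M M1 M0 hT hr IH] hM x y hx hy c hc.
  have e := fn_uniq hx hy; subst y.
  have -> : c = x by case: hc => /andP[h1 h2]; apply/eqP; rewrite eqn_leq ?h1 ?h2.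
  by exists M.
have hM1 := Tw_pm hM hT.
have [x1 hx1 le1] := Tw_fn hM hT hx.
have [x' hx' le2] := Tw_fn hM1 (Tw_sym hM hT) hx1.
have e := fn_uniq hx hx'; subst x'.
case: (boolP ((x1 <= c <= y) || (y <= c <= x1))) => [/orP hc1|hc1].
  exact: IH hM1 x1 y hx1 hy c hc1.
have : (c == x) || (c == x1).
  move: hc1 hc; rewrite negb_or !negb_and -!ltnNge; lia.
by case/orP=> /eqP ->; [exists M | exists M1].
Qed.

Lemma cont_from_reach (P : {set {set V}} -> Prop) :
  (forall M, pm M -> exists Z, reach M Z /\ P Z) ->
  (forall Z1 Z2, P Z1 -> P Z2 -> Z1 = Z2) ->
  continuous_nat_set (forcing_spectrum adj).
Proof.
move=> hR hU a b c [M1 [hM1 ha]] [M2 [hM2 hb]] hc.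
have [Z1 [r1 p1]] := hR _ hM1; have [Z2 [r2 p2]] := hR _ hM2.
have e := hU _ _ p1 p2; subst Z2.
have reach_pm : forall M Z, reach M Z -> pm M -> pm Z.
  by move=> M Z; elim=> // {}M M' Z' hT _ IH hM; apply: IH; apply: Tw_pm hT.
have [y hy] := fn_exists (reach_pm _ _ r1 hM1).
case: (leqP c y) => hcy.
  apply: (ivt r1 hM1 ha hy); left; move: hc => /andP[-> _]; exact: hcy.
apply: (ivt r2 hM2 hb hy); right; move: hc => /andP[_ ->]; rewrite andbT; exact: ltnW.
Qed.

End Generic.

Import GRing.Theory Num.Theory.

Section Cyl.
Variables (N k : nat).
Hypotheses (HN : 2 < N) (HNodd : odd N) (Hk : odd k).
Local Notation R := k.+1.
Local Notation T := (cyl_vertex k N).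
Local Notation adj := (@cyl_adj k N).
Local Notation pm := (perfect_matching adj).
Implicit Types (M : {set {set T}}) (a b c : 'I_N).

Definition vx (a : 'I_N) (y : nat) : T := (a, inord y).
Definition sc (a : 'I_N) : 'I_N := ordS a.
Definition pr (a : 'I_N) : 'I_N := ord_pred a.
Definition hE a y := [set vx a y; vx (sc a) y].
Definition vE a y := [set vx a y; vx a y.+1].
Definition hor M a y := hE a y \in M.

Lemma scK a : pr (sc a) = a. Proof. exact: ordSK. Qed.
Lemma prK a : sc (pr a) = a. Proof. exact: ord_predK. Qed.
Lemma sc_inj : injective sc. Proof. exact: ordS_inj. Qed.
Lemma sc_val a : (sc a : nat) = a.+1 %% N. Proof. by []. Qed.

Lemma sc_neq a : (sc a == a) = false.
Proof.
apply/negbTE; rewrite -val_eqE /=.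
have ha := ltn_ord a.
case: (ltnP a.+1 N) => h; first by rewrite modn_small // neq_ltn ltnSn orbT.
have e : a.+1 = N by apply/eqP; rewrite eqn_leq h ha.
by rewrite e modnn; apply/eqP => e0; move: e; rewrite -e0; move: HN; lia.
Qed.

Lemma sc2_neq a : (sc (sc a) == a) = false.
Proof.
apply/negbTE; rewrite -val_eqE /= -[(_ %% N).+1]addn1 modnDml addn1.
have ha := ltn_ord a.
case: (ltnP a.+2 N) => h; first by rewrite modn_small //; lia.
have -> : a.+2 = (a.+2 - N) + N by lia.
rewrite modnDr modn_small; lia.
Qed.

Lemma vx_eq a b y z : y < R -> z < R -> (vx a y == vx b z) = (a == b) && (y == z).
Proof.
move=> hy hz; rewrite /vx xpair_eqE; congr (_ && _).
by rewrite -val_eqE /= !inordK.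
Qed.

Lemma mem_vx2 p q a y b z : q < R -> y < R -> z < R ->
  (vx p q \in [set vx a y; vx b z]) = ((p == a) && (q == y)) || ((p == b) && (q == z)).
Proof. by move=> hq hy hz; rewrite in_set2 !vx_eq. Qed.

Lemma vx_surj (x : T) : x = vx x.1 x.2.
Proof. by case: x => a y; rewrite /vx inord_val. Qed.

Lemma adj_vx a b y z : y < R -> z < R ->
  adj (vx a y) (vx b z) = ((y == z) && ((sc a == b) || (sc b == a))) ||
                          ((a == b) && ((y.+1 == z) || (z.+1 == y))).
Proof.
move=> hy hz; rewrite /cyl_adj /vx /= !inordK //.
Qed.

Lemma adj_sym x y : adj x y = adj y x.
Proof.
rewrite /cyl_adj; case: x y => a y [b z] /=.
by congr (_ && _ || _ && _); [apply: eq_sym | apply: orbC | apply: eq_sym | apply: orbC].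
Qed.

Lemma sc_inj_eq a b : (sc a == sc b) = (a == b).
Proof. exact: (inj_eq sc_inj). Qed.

Lemma hE_eq a b y z : y < R -> z < R -> (hE a y == hE b z) = (a == b) && (y == z).
Proof.
move=> hy hz; apply/eqP/andP => [e|[/eqP-> /eqP->]] //.
have h1 : vx a y \in hE b z by rewrite -e in_set2 eqxx.
have h2 : vx (sc a) y \in hE b z by rewrite -e in_set2 eqxx orbT.
move: h1 h2; rewrite /hE !mem_vx2 //.
case: (eqVneq y z) => [eyz|]; last by rewrite ?andbF.
subst z; rewrite ?eqxx ?andbT.
case: (eqVneq a b) => [->|nab] //= /eqP ea; subst a.
by rewrite sc2_neq sc_inj_eq sc_neq.
Qed.

Lemma hE_vE a c y z : y < R -> z.+1 < R -> hE a y != vE c z.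
Proof.
move=> hy hz; apply/eqP => e.
have h1 : vx a y \in vE c z by rewrite -e in_set2 eqxx.
have h2 : vx (sc a) y \in vE c z by rewrite -e in_set2 eqxx orbT.
move: h1 h2; rewrite /vE !mem_vx2 // ?(ltnW hz) //.
case: (eqVneq a c) => [->|]; last by [].
by rewrite sc_neq.
Qed.

Lemma vE_eq a b y z : y.+1 < R -> z.+1 < R -> (vE a y == vE b z) = (a == b) && (y == z).
Proof.
move=> hy hz; apply/eqP/andP => [e|[/eqP-> /eqP->]] //.
have h1 : vx a y \in vE b z by rewrite -e in_set2 eqxx.
have h2 : vx a y.+1 \in vE b z by rewrite -e in_set2 eqxx orbT.
move: h1 h2; rewrite /vE !mem_vx2 // ?(ltnW hy) ?(ltnW hz) //.
case: (eqVneq a b) => [eab|]; last by [].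
subst b => /= h1 h2; split => //; move: h1 h2; lia.
Qed.

Lemma edge_at M c y E : pm M -> E \in M -> y < R -> vx c y \in E ->
  [\/ E = hE c y, E = hE (pr c) y, (y.+1 < R /\ E = vE c y) | (0 < y /\ E = vE c y.-1)].
Proof.
move=> hM hEM hy vE0.
have [w [aw eE]] : exists w, adj (vx c y) w /\ E = [set vx c y; w].
  have [x [z [axz [_ eE]]]] := pm_edge hM hEM.
  move: vE0; rewrite eE in_set2 => /orP[]/eqP ->.
    by exists z.
  by exists x; rewrite adj_sym setUC.
move: aw; rewrite (vx_surj w) adj_vx //; set w1 := w.1; set w2 : nat := w.2.
rewrite eE (vx_surj w) -/w1 -/w2.
have hw2 : w2 < R by rewrite /w2.
case/orP=> /andP[/eqP e /orP[]/eqP e'].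
- by constructor 1; rewrite -e' -e.
- constructor 2; have -> : w1 = pr c by rewrite -e' scK.
  by rewrite -e /hE prK setUC.
- constructor 3; split; first by rewrite e'.
  by rewrite -e -e'.
- constructor 4; split; first by rewrite -e'.
  by rewrite -e -e' /vE /= setUC.
Qed.

Definition cb M c t := (0 < t) && (t < R) && (vE c t.-1 \in M).

Lemma col_one M a t : pm M -> t < R ->
  (hor M a t + hor M (sc a) t + cb M (sc a) t.+1 + cb M (sc a) t = 1)%N.
Proof.
move=> hM ht.
set c := sc a; set v := vx c t.
have [E hEM vE0] := pm_cover hM v.
have same : forall E', E' \in M -> v \in E' -> E' = E.
  by move=> E' h1 h2; apply: (pm_uniq hM h1 hEM h2 vE0).
have m1 : v \in hE a t by rewrite /v /hE in_set2 eqxx orbT.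
have m2 : v \in hE c t by rewrite /v /hE in_set2 eqxx.
have m3 : v \in vE c t by rewrite /v /vE in_set2 eqxx.
have m4 : 0 < t -> v \in vE c t.-1 by move=> h; rewrite /v /vE prednK // in_set2 eqxx orbT.
have n12 : hE a t != hE c t by rewrite hE_eq // /c eq_sym sc_neq.
have n13 : t.+1 < R -> hE a t != vE c t by move=> h; apply: hE_vE.
have n14 : 0 < t -> hE a t != vE c t.-1 by move=> h; apply: hE_vE => //; rewrite prednK.
have n23 : t.+1 < R -> hE c t != vE c t by move=> h; apply: hE_vE.
have n24 : 0 < t -> hE c t != vE c t.-1 by move=> h; apply: hE_vE => //; rewrite prednK.
have n34 : 0 < t -> t.+1 < R -> vE c t != vE c t.-1.
  move=> h h'; rewrite vE_eq ?prednK // eqxx /=; lia.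
have atl : [|| hor M a t, hor M c t, cb M c t.+1 | cb M c t].
  have := edge_at hM hEM ht vE0; rewrite {1 2}/c scK /hor /cb /= => -[] e.
  - by rewrite -e hEM orbT.
  - by rewrite -e hEM.
  - by case: e => h e; rewrite -e hEM h !orbT.
  - by case: e => h e; rewrite -e hEM h ht !orbT.
move: atl; rewrite /hor /cb /=.
have excl : forall E1 E2, E1 \in M -> E2 \in M -> v \in E1 -> v \in E2 -> E1 != E2 -> False.
  by move=> E1 E2 h1 h2 v1 v2; rewrite (same _ h1 v1) (same _ h2 v2) eqxx.
case h1 : (hE a t \in M); case h2 : (hE c t \in M);
case h3 : (t.+1 < R); case h4 : (vE c t \in M);
case h5 : (0 < t); case h6 : (vE c t.-1 \in M); rewrite ?ht //= => _; exfalso;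
first [ exact: (excl _ _ h1 h2 m1 m2 n12) | exact: (excl _ _ h1 h4 m1 m3 (n13 h3))
 | exact: (excl _ _ h1 h6 m1 (m4 h5) (n14 h5)) | exact: (excl _ _ h2 h4 m2 m3 (n23 h3))
 | exact: (excl _ _ h2 h6 m2 (m4 h5) (n24 h5)) | exact: (excl _ _ h4 h6 m3 (m4 h5) (n34 h5 h3)) ].
Qed.

Local Open Scope ring_scope.

Definition st M a (y : nat) : int := if hor M a y then 1 - 2 * (y %% 2)%N%:Z else 0.
Fixpoint g M a (t : nat) : int := if t is t'.+1 then g M a t' + st M a t' else 0.

Lemma gS M a t : g M a t.+1 = g M a t + st M a t. Proof. by []. Qed.

Lemma col_inv M a t : pm M -> (t <= R)%N ->
  g M a t + g M (sc a) t = ((t + cb M (sc a) t) %% 2)%N%:Z.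
Proof.
move=> hM; elim: t => [|t IH] ht; first by rewrite /cb /=.
have ht' : (t < R)%N by [].
have := col_one a hM ht'; move: (IH (ltnW ht)).
rewrite !gS /st.
have cR : cb M (sc a) t.+1 = (t.+1 < R)%N && (vE (sc a) t \in M) by rewrite /cb /=.
move: cR.
case: (hor M a t); case: (hor M (sc a) t); case: (cb M (sc a) t.+1); case: (cb M (sc a) t) => /=; lia.
Qed.

Lemma iter_sc_val j a : (iter j sc a : nat) = ((a + j) %% N)%N.
Proof.
elim: j => [|j IH] /=; first by rewrite addn0 modn_small.
by rewrite IH -[((a + j) %% N).+1]addn1 modnDml addn1 addnS.
Qed.

Lemma gR M a : pm M -> g M a R = 0.
Proof.
move=> hM.
have hs : forall b, g M b R + g M (sc b) R = 0.
  by move=> b; rewrite col_inv // /cb ltnn andbF addn0 modn2 /= Hk.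
have hi : forall j, g M (iter j sc a) R = if odd j then - g M a R else g M a R.
  elim=> [|j IH] //=; have := hs (iter j sc a); move: IH; case: (odd j) => /=; lia.
have e : iter N sc a = a by apply: ord_inj; rewrite iter_sc_val modnDr modn_small.
by move: (hi N); rewrite e HNodd; lia.
Qed.

Lemma g0 M a : g M a 0 = 0. Proof. by []. Qed.

Lemma g_change M M' a y (b : bool) : (y.+1 < R)%N ->
  (forall a' s, (s < R)%N -> hor M' a' s =
     if (a' == a) && ((s == y) || (s == y.+1)) then b else hor M a' s) ->
  hor M a y = ~~ b -> hor M a y.+1 = ~~ b ->
  forall a' s, (s <= R)%N -> g M' a' s = g M a' s +
     (if (a' == a) && (s == y.+1) then (if b then 1 - 2 * (y %% 2)%N%:Z else 2 * (y %% 2)%N%:Z - 1) else 0).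
Proof.
move=> hy hM' h1 h2 a'; elim=> [|s IH] hs; first by rewrite andbF addr0.
rewrite !gS IH ?(ltnW hs) // /st hM' //.
case: (eqVneq a' a) => [->|na] /=; last by rewrite !addr0.
case: (eqVneq s y) => [->|ny] /=.
  rewrite h1 eqxx (ltn_eqF (ltnSn y)) /=; destruct b; rewrite /=; lia.
case: (eqVneq s y.+1) => [->|ny1] /=.
  rewrite h2 ?eqxx ?(gtn_eqF (ltnSn y.+1)) ?(gtn_eqF (ltnSn y)) /= ?orbT; destruct b; rewrite /=; lia.
by rewrite eqSS (negbTE ny) /= !addr0.
Qed.

Lemma neqS (y : nat) : (y == y.+1) = false. Proof. exact: ltn_eqF. Qed.
Lemma Sneq (y : nat) : (y.+1 == y) = false. Proof. exact: gtn_eqF. Qed.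
Lemma a_sc a : (a == sc a) = false. Proof. by rewrite eq_sym sc_neq. Qed.

Lemma twist_rem M a y : pm M -> (y.+1 < R)%N -> hor M a y -> hor M a y.+1 ->
  exists M', Tw adj M M' /\ (forall a' s, (s <= R)%N -> g M' a' s = g M a' s +
     (if (a' == a) && (s == y.+1) then 2 * (y %% 2)%N%:Z - 1 else 0)).
Proof.
move=> hM hy h1 h2.
have hy' : (y < R)%N by apply: ltnW.
have hsq : sq adj (vx a y) (vx (sc a) y) (vx (sc a) y.+1) (vx a y.+1).
  split.
  - by rewrite /= !inE !vx_eq // !eqxx ?a_sc ?sc_neq ?neqS ?Sneq.
  - by rewrite adj_vx // !eqxx.
  - by rewrite adj_vx // !eqxx ?orbT.
  - by rewrite adj_vx // !eqxx ?orbT.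
  - by rewrite adj_vx // !eqxx ?orbT.
set M' := swap M (hE a y) [set vx (sc a) y.+1; vx a y.+1] (vE (sc a) y) [set vx a y.+1; vx a y].
exists M'; split.
  exists (vx a y), (vx (sc a) y), (vx (sc a) y.+1), (vx a y.+1); split=> //.
  split=> //; split=> //; by rewrite setUC.
move=> a' s hs; have := @g_change M M' a y false hy; rewrite /= => -> //.
move=> a'' s' hs'; rewrite /hor /M' /swap !inE.
rewrite (negbTE (hE_vE _ _ _ _)) // [[set vx a y.+1; _]]setUC (negbTE (hE_vE _ _ _ _)) //=.
rewrite [[set vx (sc a) y.+1; _]]setUC -/(hE a y.+1) -/(hE a y) !hE_eq //.
by case: (a'' == a); case: (s' == y); case: (s' == y.+1).
Qed.

Lemma twist_add M a y : pm M -> (y.+1 < R)%N -> vE a y \in M -> vE (sc a) y \in M ->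
  exists M', Tw adj M M' /\ (forall a' s, (s <= R)%N -> g M' a' s = g M a' s +
     (if (a' == a) && (s == y.+1) then 1 - 2 * (y %% 2)%N%:Z else 0)).
Proof.
move=> hM hy h1 h2.
have hy' : (y < R)%N by apply: ltnW.
have hsq : sq adj (vx a y) (vx a y.+1) (vx (sc a) y.+1) (vx (sc a) y).
  split.
  - by rewrite /= !inE !vx_eq // !eqxx ?a_sc ?sc_neq ?neqS ?Sneq.
  - by rewrite adj_vx // !eqxx ?orbT.
  - by rewrite adj_vx // !eqxx ?orbT.
  - by rewrite adj_vx // !eqxx ?orbT.
  - by rewrite adj_vx // !eqxx ?orbT.
set M' := swap M (vE a y) [set vx (sc a) y.+1; vx (sc a) y] (hE a y.+1) [set vx (sc a) y; vx a y].
have n1 : hor M a y = false.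
  apply/negbTE/negP => h; have e := pm_uniq hM h h1 (v := vx a y).
  move: (hE_vE a a hy' hy); rewrite e ?eqxx //; by rewrite !inE eqxx.
have n2 : hor M a y.+1 = false.
  apply/negbTE/negP => h; have e := pm_uniq hM h h1 (v := vx a y.+1).
  move: (hE_vE a a hy hy); rewrite e ?eqxx //; by rewrite !inE eqxx ?orbT.
exists M'; split.
  exists (vx a y), (vx a y.+1), (vx (sc a) y.+1), (vx (sc a) y); split=> //.
  split=> //; split=> //; by rewrite setUC.
move=> a' s hs; have := @g_change M M' a y true hy; rewrite /= => -> //.
move=> a'' s' hs'; rewrite /hor /M' /swap !inE.
rewrite [[set vx (sc a) y; _]]setUC -/(hE a y) [[set vx (sc a) y.+1; _]]setUC -/(vE (sc a) y).
rewrite !hE_eq // (negbTE (hE_vE _ _ _ _)) // (negbTE (hE_vE _ _ _ _)) //=.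
by case: (a'' == a); case: (s' == y); case: (s' == y.+1); rewrite ?orbT.
Qed.

Definition Phi M := (\sum_(p : 'I_N * 'I_R.+1) absz (g M p.1 p.2))%N.

Lemma Phi_lt M M' a t (d : int) : (t <= R)%N ->
  (forall a' s, (s <= R)%N -> g M' a' s = g M a' s + (if (a' == a) && (s == t) then d else 0)) ->
  (absz (g M a t + d)%R < absz (g M a t))%N -> (Phi M' < Phi M)%N.
Proof.
move=> ht hg hlt.
have ht' : (t < R.+1)%N by [].
pose p0 : 'I_N * 'I_R.+1 := (a, Ordinal ht').
rewrite /Phi (bigD1 p0) // [X in (_ < X)%N](bigD1 p0) //=.
rewrite hg // !eqxx /=.
rewrite (eq_bigr (fun p : 'I_N * 'I_R.+1 => absz (g M p.1 p.2))) ?ltn_add2r //.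
move=> [a' s] /= hp; rewrite hg; last by rewrite -ltnS.
case: (eqVneq a' a) => [ea|] /=; last by rewrite addr0.
case: (eqVneq (s : nat) t) => [es|]; last by rewrite addr0.
have es' : s = Ordinal ht' by apply: ord_inj.
by move: hp; rewrite /p0 ea es' eqxx.
Qed.

Lemma stE M a y : st M a y = if hor M a y then 1 - 2 * (y %% 2)%N%:Z else 0.
Proof. by []. Qed.


Lemma cb_col M a t : pm M -> (t <= R)%N ->
  g M a t + g M (sc a) t = ((t + cb M (sc a) t) %% 2)%N%:Z.
Proof. by move=> hM ht; apply: col_inv. Qed.

Lemma desc_pos M a v : pm M -> 0 < v -> (exists t, (t <= R)%N && (g M a t == v)) ->
  (forall a' s, (s <= R)%N -> g M a' s <= v /\ - g M a' s < v) ->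
  exists M', Tw adj M M' /\ (Phi M' < Phi M)%N.
Proof.
move=> hM vpos ex bnd.
case: (ex_minnP ex) => t1 /andP[ht1 /eqP gt1] tmin.
case: t1 ht1 gt1 tmin => [|s] ht1 gt1 tmin; first by move: gt1 vpos; rewrite g0; lia.
have hs : (s.+1 < R)%N.
  rewrite ltn_neqAle ht1 andbT; apply/eqP => e; move: gt1 vpos; rewrite e gR //; lia.
have gs : g M a s < v.
  have [b1 _] := bnd a s (ltnW (ltnW hs)).
  case: (eqVneq (g M a s) v) => [e|ne]; last by move: ne b1; lia.
  have := tmin s; rewrite e eqxx (ltnW (ltnW hs)) => /(_ isT); rewrite ltnn.
  done.
have gv := gt1.
move: gt1; rewrite gS stE; case hh : (hor M a s) => /= gt1; last by move: gs gt1; lia.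
have ev : (s %% 2 = 0)%N by move: gs gt1; lia.
case h2 : (hor M a s.+1).
  have [M' [hT hg]] := twist_rem hM hs hh h2.
  exists M'; split=> //; apply: (Phi_lt (t := s.+1) (ltnW hs) hg).
  rewrite gv; move: vpos ev; lia.
have g2 : g M a s.+2 = v by rewrite gS gv stE h2 /= addr0.
have hs2 : (s.+2 < R)%N.
  rewrite ltn_neqAle hs andbT; apply/eqP => e; move: g2 vpos; rewrite e gR //; lia.
have h3 : hor M a s.+2 = false.
  apply/negP => h; have [b1 _] := bnd a s.+3 hs2; move: b1; rewrite gS stE h g2.
  move: ev; lia.
have c1 := cb_col a hM (ltnW hs2).
have c2 := cb_col (pr a) hM (ltnW hs2); rewrite prK in c2.
have [_ b1] := bnd (sc a) s.+2 (ltnW hs2); have [_ b2] := bnd (pr a) s.+2 (ltnW hs2).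
have v1 : vE (sc a) s.+1 \in M.
  move: c1; rewrite /cb hs2 g2 andbT; case: (vE (sc a) s.+1 \in M) => // c1; move: c1 b1 ev; lia.
have v2 : vE a s.+1 \in M.
  move: c2; rewrite /cb hs2 g2 andbT; case: (vE a s.+1 \in M) => // c2; move: c2 b2 ev; lia.
have [M' [hT hg]] := twist_add hM hs2 v2 v1.
exists M'; split=> //; apply: (Phi_lt (t := s.+2) (ltnW hs2) hg).
rewrite g2; move: vpos ev; lia.
Qed.

Lemma desc_neg M a v : pm M -> v < 0 -> (exists t, (t <= R)%N && (g M a t == v)) ->
  (forall a' s, (s <= R)%N -> v <= g M a' s /\ g M a' s <= - v) ->
  exists M', Tw adj M M' /\ (Phi M' < Phi M)%N.
Proof.
move=> hM vneg ex bnd.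
case: (ex_minnP ex) => t1 /andP[ht1 /eqP gt1] tmin.
case: t1 ht1 gt1 tmin => [|s] ht1 gt1 tmin; first by move: gt1 vneg; rewrite g0; lia.
have hs : (s.+1 < R)%N.
  rewrite ltn_neqAle ht1 andbT; apply/eqP => e; move: gt1 vneg; rewrite e gR //; lia.
have gs : v < g M a s.
  have [b1 _] := bnd a s (ltnW (ltnW hs)).
  case: (eqVneq (g M a s) v) => [e|ne]; last by move: ne b1; lia.
  have := tmin s; rewrite e eqxx (ltnW (ltnW hs)) => /(_ isT); rewrite ltnn.
  done.
have gv := gt1.
move: gt1; rewrite gS stE; case hh : (hor M a s) => /= gt1; last by move: gs gt1; lia.
have ev : (s %% 2 = 1)%N by move: gs gt1; lia.
case h2 : (hor M a s.+1).
  have [M' [hT hg]] := twist_rem hM hs hh h2.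
  exists M'; split=> //; apply: (Phi_lt (t := s.+1) (ltnW hs) hg).
  rewrite gv; move: vneg ev; lia.
have g2 : g M a s.+2 = v by rewrite gS gv stE h2 /= addr0.
have hs2 : (s.+2 < R)%N.
  rewrite ltn_neqAle hs andbT; apply/eqP => e; move: g2 vneg; rewrite e gR //; lia.
have h3 : hor M a s.+2 = false.
  apply/negP => h; have [b1 _] := bnd a s.+3 hs2; move: b1; rewrite gS stE h g2.
  move: ev; lia.
have c1 := cb_col a hM (ltnW hs2).
have c2 := cb_col (pr a) hM (ltnW hs2); rewrite prK in c2.
have [_ b1] := bnd (sc a) s.+2 (ltnW hs2); have [_ b2] := bnd (pr a) s.+2 (ltnW hs2).
have v1 : vE (sc a) s.+1 \in M.
  move: c1; rewrite /cb hs2 g2 andbT; case: (vE (sc a) s.+1 \in M) => // c1; move: c1 b1 ev; lia.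
have v2 : vE a s.+1 \in M.
  move: c2; rewrite /cb hs2 g2 andbT; case: (vE a s.+1 \in M) => // c2; move: c2 b2 ev; lia.
have [M' [hT hg]] := twist_add hM hs2 v2 v1.
exists M'; split=> //; apply: (Phi_lt (t := s.+2) (ltnW hs2) hg).
rewrite g2; move: vneg ev; lia.
Qed.

Lemma descent M : pm M -> (exists p : 'I_N * 'I_R.+1, g M p.1 p.2 != 0) ->
  exists M', Tw adj M M' /\ (Phi M' < Phi M)%N.
Proof.
move=> hM [p0 hp0].
pose key (p : 'I_N * 'I_R.+1) := (2 * absz (g M p.1 p.2) + ((g M p.1 p.2 < 0)%R : nat))%N.
case: (@arg_maxnP _ p0 xpredT key isT) => [[a t] _ hmax].
have kb : forall a' s, (s <= R)%N ->
    (2 * absz (g M a' s) + ((g M a' s < 0)%R : nat) <= key (a, t))%N.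
  move=> a' s hs; have hs' : (s < R.+1)%N by [].
  exact: (hmax (a', Ordinal hs') isT).
have k0 := hmax p0 isT.
have ht : (t <= R)%N by rewrite -ltnS.
have ex : exists t', (t' <= R)%N && (g M a t' == g M a t) by exists t; rewrite ht eqxx.
case: (boolP (g M a t < 0)) => hneg.
  apply: (desc_neg hM hneg ex) => a' s hs; have := kb a' s hs.
  by rewrite /key /=; move: hneg; lia.
have hpos : 0 < g M a t by move: k0 hp0 hneg; rewrite /key /=; lia.
apply: (desc_pos hM hpos ex) => a' s hs; have := kb a' s hs.
by rewrite /key /=; move: hpos; lia.
Qed.

Definition nohor M := forall a y, (y < R)%N -> ~~ hor M a y.

Lemma nohor_of M : pm M -> (forall p : 'I_N * 'I_R.+1, g M p.1 p.2 = 0) -> nohor M.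
Proof.
move=> hM h0 a y hy.
have h1 : (y < R.+1)%N by apply: ltnW. have h2 : (y.+1 < R.+1)%N by [].
have e1 : g M a y = 0 := h0 (a, Ordinal h1).
have e2 : g M a y.+1 = 0 := h0 (a, Ordinal h2).
move: e2; rewrite gS e1 stE; case: (hor M a y) => //; lia.
Qed.

Lemma nohor_D M c y : pm M -> nohor M -> (y < R)%N ->
  ((y.+1 < R)%N && (vE c y \in M)) = ~~ odd y.
Proof.
move=> hM hn; elim: y => [|y IH] hy.
  have := col_one (pr c) hM hy; rewrite prK /cb /=.
  have := hn (pr c) 0%N hy; have := hn c 0%N hy.
  by case: (hor M _ _); case: (hor M _ _); case: (_ < R)%N; case: (_ \in M).
have := col_one (pr c) hM hy; rewrite prK /cb /=.
have := hn (pr c) y.+1 hy; have := hn c y.+1 hy.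
rewrite hy /=; have := IH (ltnW hy); rewrite hy /=.
by case: (hor M _ _); case: (hor M _ _); case: (y.+2 < R)%N; case: (vE c y.+1 \in M);
  case: (vE c y \in M); case: (odd y).
Qed.

Lemma nohor_sub M1 M2 : pm M1 -> pm M2 -> nohor M1 -> nohor M2 -> M1 \subset M2.
Proof.
move=> h1 h2 n1 n2; apply/subsetP => E hE.
have [x [z [_ [_ eE]]]] := pm_edge h1 hE.
have xE : x \in E by rewrite eE set21.
rewrite (vx_surj x) in xE; set c := x.1 in xE; set y : nat := x.2 in xE.
have hy : (y < R)%N by rewrite /y.
case: (edge_at h1 hE hy xE) => [e|e|[hy1 e]|[hy0 e]].
- by move: (n1 c y hy); rewrite /hor -e hE.
- by move: (n1 (pr c) y hy); rewrite /hor -e hE.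
- have d1 := nohor_D c h1 n1 hy; have d2 := nohor_D c h2 n2 hy.
  rewrite hy1 -e hE /= in d1; rewrite hy1 /= -d1 in d2.
  by rewrite e d2.
- have hy' : (y.-1 < R)%N by apply: leq_ltn_trans (leq_pred y) hy.
  have hy1 : (y.-1.+1 < R)%N by rewrite prednK.
  have d1 := nohor_D c h1 n1 hy'; have d2 := nohor_D c h2 n2 hy'.
  rewrite hy1 -e hE /= in d1; rewrite hy1 /= -d1 in d2.
  by rewrite e d2.
Qed.

Lemma conn M : pm M -> exists Z, reach adj M Z /\ (pm Z /\ nohor Z).
Proof.
move=> hM.
suff: forall n M, (Phi M <= n)%N -> pm M -> exists Z, reach adj M Z /\ (pm Z /\ nohor Z).
  by move/(_ (Phi M) M (leqnn _) hM).
elim=> [|n IH] {}M hn {}hM.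
  exists M; split; first exact: reach0.
  split=> //; apply: nohor_of => // p.
  move: hn; rewrite leqn0 /Phi sum_nat_eq0 => /forallP /(_ p) /implyP /(_ isT).
  by rewrite absz_eq0 => /eqP.
case: (boolP [exists p : 'I_N * 'I_R.+1, g M p.1 p.2 != 0]) => [/existsP ex|].
  have [M' [hT hlt]] := descent hM ex.
  have [Z [hr hZ]] := IH M' (leq_trans hlt hn) (Tw_pm hM hT).
  by exists Z; split=> //; apply: reachS hT hr.
rewrite negb_exists => /forallP hall.
exists M; split; first exact: reach0.
by split=> //; apply: nohor_of => // p; apply/eqP; rewrite -[_ == _]negbK hall.
Qed.

Theorem cyl_cont : continuous_nat_set (forcing_spectrum adj).
Proof.
apply: (@cont_from_reach _ adj (fun Z => pm Z /\ nohor Z)).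
  exact: conn.
move=> Z1 Z2 [p1 n1] [p2 n2]; apply/eqP; rewrite eqEsubset.
by rewrite !nohor_sub.
Qed.

End Cyl.

Theorem corollary5p5 (n m : nat) :
  1 <= n -> 1 <= m ->
  continuous_nat_set (C_graph_spectrum (2 * m - 1) (2 * n + 1)).
Proof.
move=> hn hm; rewrite /C_graph_spectrum; apply: cyl_cont.
- lia.
- by rewrite addn1 /= mul2n odd_double.
- have -> : 2 * m - 1 = (2 * (m - 1)).+1 by lia.
  by rewrite /= mul2n odd_double.
Qed.
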